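(* Let $t\in\mathbb{R}$ and $0\le\beta\le1$. Define polynomials $B^*_n(t,\beta;x)$ by $$\sum_{n=0}^\infty B^*_n(t,\beta;x)\frac{z^n}{n!}=\left(\frac{z}{\beta(e^z-1)+(1-\beta)z}\right)^te^{xz}$$ for $z$ in a neighborhood of $0$. Then for every $n\in\mathbb{N}_0$, $$B^*_n(t,\beta;0)=\sum_{m=0}^n\binom{-t}{m}\beta^m\sum_{k=0}^m\binom mk(-1)^{m-k}\frac{S(n+k,k)}{\binom{n+k}{n}}.$$ *)

(* Defs.v *)
From Stdlib Require Import Arith Reals Lra.
Open Scope R_scope.

Fixpoint stirling2 (n k : nat) : nat :=
  match n, k with
  | O, O => 1%nat
  | O, S _ => 0%nat
  | S _, O => 0%nat
  | S n', S k' => (S k' * stirling2 n' (S k') + stirling2 n' k')%nat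
  end.

Fixpoint falling (a : R) (m : nat) : R :=
  match m with
  | O => 1
  | S m' => falling a m' * (a - INR m')
  end.

Definition gbinom (a : R) (m : nat) : R := falling a m / INR (fact m).

(* The generating function (z/(beta(e^z-1)+(1-beta)z))^t e^{xz}, for z <> 0
   (where the base is > 0 for real z, 0<=beta<=1). *)
Definition Bstar_gf (t beta x z : R) : R :=
  Rpower (z / (beta * (exp z - 1) + (1 - beta) * z)) t * exp (x * z).

(* b n x are the coefficients B*_n(t,beta;x) of the exponential generating
   function: sum_n b n x z^n/n! = Bstar_gf t beta x z for z in a punctured
   neighbourhood of 0 (the coefficients are thereby uniquely determined). *)
Definition is_Bstar (t beta : R) (b : nat -> R -> R) : Prop :=
  forall x : R, exists delta : R, 0 < delta /\
    forall z : R, 0 < Rabs z < delta ->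
      infinite_sum (fun n => b n x * z ^ n / INR (fact n)) (Bstar_gf t beta x z).

Definition Bstar0_formula (t beta : R) (n : nat) : R :=
  sum_f_R0 (fun m =>
     gbinom (- t) m * beta ^ m *
     sum_f_R0 (fun k =>
        C m k * (-1) ^ (m - k) * INR (stirling2 (n + k) k) / C (n + k) n) m) n.

(* Main.v *)
Require Import Defs.
From Stdlib Require Import Reals FunctionalExtensionality.
From mathcomp Require Import all_boot all_algebra.
From mathcomp Require Import Rstruct lra ring.
Import mathcomp.order.order.Order.TTheory GRing.Theory Num.Theory.
Set Implicit Arguments.
Unset Strict Implicit.
Local Open Scope ring_scope.

Lemma min_pos (d1 d2 : R) : 0 < d1 -> 0 < d2 -> exists d : R, [/\ 0 < d, d <= d1 & d <= d2].
Proof.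
move=> h1 h2; exists (Num.min d1 d2); split.
- by rewrite lt_min h1 h2.
- by rewrite ge_min lexx.
- by rewrite ge_min lexx orbT.
Qed.

Definition approx (F : R -> R) (p : {poly R}) (N : nat) : Prop :=
  exists C d : R, [/\ 0 <= C, 0 < d, d <= 1 &
    forall z : R, 0 < `|z| -> `|z| < d -> `|F z - p.[z]| <= C * `|z| ^+ N.+1].

Lemma approx_intro F p N (C d : R) : 0 < d ->
  (forall z : R, 0 < `|z| -> `|z| < d -> `|F z - p.[z]| <= C * `|z| ^+ N.+1) ->
  approx F p N.
Proof.
move=> d0 H.
have [d' [d'0 d'1 d'2]] := @min_pos d 1 d0 ltr01.
exists (Num.max C 0), d'; split => //.
- by rewrite le_max lexx orbT.
move=> z z0 zd; have := H z z0 (lt_le_trans zd d'1).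
have hz : 0 <= `|z| ^+ N.+1 by rewrite exprn_ge0.
have hC : C <= Num.max C 0 by rewrite le_max lexx.
nra.
Qed.

Lemma poly_bound (p : {poly R}) : exists M : R, 0 <= M /\ forall z : R, `|z| <= 1 -> `|p.[z]| <= M.
Proof.
elim/poly_ind: p => [|p c [M [M0 HM]]].
  by exists 0; split => // z _; rewrite horner0 normr0.
exists (M + `|c|); split; first by have := normr_ge0 c; lra.
move=> z hz; rewrite hornerMXaddC.
apply: le_trans (ler_normD _ _) _; rewrite normrM.
have := HM z hz; have := normr_ge0 p.[z]; have := normr_ge0 z; nra.
Qed.

Lemma polyX_bound (p : {poly R}) k : exists M : R, 0 <= M /\
  forall z : R, `|z| <= 1 -> `|('X^k * p).[z]| <= M * `|z| ^+ k.
Proof.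
have [M [M0 HM]] := poly_bound p; exists M; split => // z hz.
rewrite hornerM hornerXn normrM normrX mulrC.
apply: ler_wpM2r; [exact: exprn_ge0 | exact: HM].
Qed.

Lemma approx_bound F p N : approx F p N ->
  exists M d : R, [/\ 0 <= M, 0 < d & forall z : R, 0 < `|z| -> `|z| < d -> `|F z| <= M].
Proof.
move=> [C [d [C0 d0 d1 H]]].
have [M [M0 HM]] := poly_bound p.
exists (M + C), d; split => //; first lra.
move=> z z0 zd; have hz1 : `|z| <= 1 by lra.
have := H z z0 zd; have := HM z hz1.
have := exprn_ile1 N.+1 (normr_ge0 z) hz1.
have := ler_normD (F z - p.[z]) p.[z]; rewrite subrK.
have := exprn_ge0 N.+1 (normr_ge0 z).
nra.
Qed.

Lemma approx_addX F p N r : approx F p N -> approx F (p + 'X^(N.+1) * r) N.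
Proof.
move=> [C [d [C0 d0 d1 H]]].
have [M [M0 HM]] := polyX_bound r N.+1.
apply: (@approx_intro _ _ _ (C + M) d d0) => z z0 zd.
have hz1 : `|z| <= 1 by lra.
rewrite hornerD opprD addrA.
apply: le_trans (ler_normD _ _) _; rewrite normrN.
rewrite mulrDl; have := H z z0 zd; have := HM z hz1; lra.
Qed.

Lemma approx_eqpoly F (p q : {poly R}) N : approx F p N -> (forall i, (i <= N)%N -> p`_i = q`_i) -> approx F q N.
Proof.
move=> Ha Hc.
set r := \poly_(i < size (q - p)) (q - p)`_(i + N.+1).
suff -> : q = p + 'X^(N.+1) * r by exact: approx_addX.
apply/polyP => i; rewrite coefD coefXnM coef_poly.
case: ltnP => hi.
  by rewrite addr0 Hc.
case: ltnP => hs.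
  by rewrite subnK // coefB addrC subrK.
rewrite addr0; apply/eqP; rewrite -subr_eq0 -coefB; apply/eqP.
by rewrite nth_default // -(subnK hi) -ltnS -addSn ltnS (leq_trans hs) // leq_addr.
Qed.



Lemma approx_feq F G p N : approx F p N -> (forall z, F z = G z) -> approx G p N.
Proof. by move=> [C [d [? ? ? H]]] E; exists C, d; split => // z ? ?; rewrite -E; apply: H. Qed.

Lemma approx_ext F G p N (e : R) : 0 < e -> approx F p N ->
  (forall z, 0 < `|z| -> `|z| < e -> F z = G z) -> approx G p N.
Proof.
move=> e0 [C [d [C0 d0 d1 H]]] E.
have [d' [d'0 h1 h2]] := @min_pos d e d0 e0.
apply: (@approx_intro _ _ _ C d' d'0) => z z0 zd.
rewrite -E //; last exact: lt_le_trans zd h2.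
exact: H z z0 (lt_le_trans zd h1).
Qed.

Lemma approx_const N (c : R) : approx (fun _ => c) c%:P N.
Proof.
apply: (@approx_intro _ _ _ 0 1 ltr01) => z _ _.
by rewrite hornerC subrr normr0 mul0r.
Qed.

Lemma approx_add F G p q N : approx F p N -> approx G q N ->
  approx (fun z => F z + G z) (p + q) N.
Proof.
move=> [C1 [d1 [C10 d10 d11 H1]]] [C2 [d2 [C20 d20 d21 H2]]].
have [d [d0 hd1 hd2]] := @min_pos d1 d2 d10 d20.
apply: (@approx_intro _ _ _ (C1 + C2) d d0) => z z0 zd.
rewrite hornerD.
have -> : F z + G z - (p.[z] + q.[z]) = (F z - p.[z]) + (G z - q.[z]) by ring.
apply: le_trans (ler_normD _ _) _; rewrite mulrDl.
apply: lerD; [exact: H1 z z0 (lt_le_trans zd hd1) | exact: H2 z z0 (lt_le_trans zd hd2)].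
Qed.

Lemma approx_mul F G p q N : approx F p N -> approx G q N ->
  approx (fun z => F z * G z) (p * q) N.
Proof.
move=> HF HG; have [MG [dG [MG0 dG0 HMG]]] := approx_bound HG.
case: HF => [C1 [d1 [C10 d10 d11 H1]]]; case: HG => [C2 [d2 [C20 d20 d21 H2]]].
have [Mp [Mp0 HMp]] := poly_bound p.
have [d [d0 hd1 hd2]] := @min_pos d1 d2 d10 d20.
have [d' [d'0 hd' hdG]] := @min_pos d dG d0 dG0.
apply: (@approx_intro _ _ _ (C1 * MG + Mp * C2) d' d'0) => z z0 zd.
rewrite hornerM.
have -> : F z * G z - p.[z] * q.[z] = (F z - p.[z]) * G z + p.[z] * (G z - q.[z]) by ring.
apply: le_trans (ler_normD _ _) _; rewrite !normrM.
have e1 := H1 z z0 (lt_le_trans zd (le_trans hd' hd1)).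
have e2 := H2 z z0 (lt_le_trans zd (le_trans hd' hd2)).
have e3 := HMG z z0 (lt_le_trans zd hdG).
have e4 := HMp z (ltW (lt_le_trans zd (le_trans hd' (le_trans hd1 d11)))).
have t1 := ler_pM (normr_ge0 _) (normr_ge0 _) e1 e3.
have t2 := ler_pM (normr_ge0 _) (normr_ge0 _) e4 e2.
apply: le_trans (lerD t1 t2) _.
by rewrite mulrDl -mulrA (mulrC _ MG) mulrA mulrA.
Qed.

Lemma approx_pow F p N k : approx F p N -> approx (fun z => F z ^+ k) (p ^+ k) N.
Proof.
move=> H; elim: k => [|k IH].
  by rewrite expr0 -polyC1; apply: approx_feq (approx_const N 1) _ => z; rewrite expr0.
by rewrite exprS; apply: approx_feq (approx_mul H IH) _ => z; rewrite exprS.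
Qed.

Lemma approx_comp (T : {poly R}) U q N : approx U q N ->
  approx (fun z => T.[U z]) (T \Po q) N.
Proof.
move=> HU; elim/poly_ind: T => [|T c IH].
  rewrite comp_poly0; apply: approx_feq (approx_const N 0) _ => z.
  by rewrite horner0.
rewrite comp_polyD comp_polyM comp_polyX comp_polyC.
apply: approx_feq (approx_add (approx_mul IH HU) (approx_const N c)) _ => z.
by rewrite hornerMXaddC.
Qed.

Lemma polyX_decomp (q : {poly R}) : q = 'X * \poly_(i < size q) q`_(i.+1) + (q`_0)%:P.
Proof.
apply/polyP => i; rewrite coefD coefXM coefC coef_poly.
case: i => [|i] //=; first by rewrite add0r.
rewrite addr0; case: ltnP => // hs; rewrite nth_default //.
exact: leq_trans hs (leqnSn _).
Qed.

Lemma approx_small U q N : approx U q N -> q`_0 = 0 ->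
  exists L rho : R, [/\ 0 <= L, 0 < rho &
    forall z, 0 < `|z| -> `|z| < rho -> `|U z| <= L * `|z|].
Proof.
move=> [C [d [C0 d0 d1 H]]] q0.
set r := \poly_(i < size q) q`_(i.+1).
have Eq : q = 'X^1 * r by rewrite {1}(polyX_decomp q) q0 addr0 expr1.
have [M [M0 HM]] := polyX_bound r 1.
exists (C + M), d; split => //; first lra.
move=> z z0 zd; have hz1 : `|z| <= 1 by lra.
have e1 := H z z0 zd; have e2 := HM z hz1.
rewrite -Eq expr1 in e2.
have hw : `|z| ^+ N.+1 <= `|z| ^+ 1.
  by apply: ler_wiXn2l => //; rewrite ?normr_ge0.
rewrite expr1 in hw.
have := ler_normD (U z - q.[z]) q.[z]; rewrite subrK => e3.
have : C * `|z| ^+ N.+1 <= C * `|z| by apply: ler_wpM2l.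
lra.
Qed.

Lemma approx_taylor (H : R -> R) (T : {poly R}) (r K : R) U q N :
  0 < r -> 0 <= K ->
  (forall u, `|u| < r -> `|H u - T.[u]| <= K * `|u| ^+ N.+1) ->
  approx U q N -> q`_0 = 0 -> approx (fun z => H (U z)) (T \Po q) N.
Proof.
move=> r0 K0 HT HU q0.
have [L [rho [L0 rho0 HL]]] := approx_small HU q0.
have [C [d [C0 d0 d1 HC]]] := approx_comp T HU.
have [e [e0 he1 he2]] := @min_pos d rho d0 rho0.
have Lr : 0 < r / (L + 1) by apply: divr_gt0 => //; lra.
have [e' [e'0 he'1 he'2]] := @min_pos e (r / (L + 1)) e0 Lr.
apply: (@approx_intro _ _ _ (K * L ^+ N.+1 + C) e' e'0) => z z0 zd.
have zd1 : `|z| < d by apply: lt_le_trans zd (le_trans he'1 he1).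
have zr : `|z| < rho by apply: lt_le_trans zd (le_trans he'1 he2).
have hU := HL z z0 zr.
have zL : `|z| * (L + 1) < r.
  by rewrite -ltr_pdivlMr; [exact: lt_le_trans zd he'2 | lra].
have Ur : `|U z| < r by have := normr_ge0 z; nra.
have e1 := HT (U z) Ur.
have e2 := HC z z0 zd1.
rewrite horner_comp; rewrite horner_comp in e2.
have -> : H (U z) - T.[q.[z]] = (H (U z) - T.[U z]) + (T.[U z] - T.[q.[z]]) by ring.
apply: le_trans (ler_normD _ _) _.
have hp : `|U z| ^+ N.+1 <= (L * `|z|) ^+ N.+1.
  apply: lerXn2r => //; rewrite nnegrE ?normr_ge0 //.
  by apply: mulr_ge0 => //; apply: normr_ge0.
rewrite exprMn in hp.
have : K * `|U z| ^+ N.+1 <= K * (L ^+ N.+1 * `|z| ^+ N.+1) by apply: ler_wpM2l.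
rewrite mulrDl -mulrA; lra.
Qed.

Lemma approx_weaken F p N n : (n <= N)%N -> approx F p N -> approx F p n.
Proof.
move=> hn [C [d [C0 d0 d1 H]]].
apply: (@approx_intro _ _ _ C d d0) => z z0 zd.
apply: le_trans (H z z0 zd) _; apply: ler_wpM2l => //.
by apply: ler_wiXn2l; rewrite ?normr_ge0 //; lra.
Qed.


Lemma small_zero (a K e : R) : 0 < e ->
  (forall z : R, 0 < `|z| -> `|z| < e -> `|a| <= K * `|z|) -> a = 0.
Proof.
move=> e0 H; apply/eqP/negPn/negP => a0.
have ha : 0 < `|a| by rewrite normr_gt0.
have K'0 : 0 < 2 * (`|K| + 1) by have := normr_ge0 K; lra.
have e2 : 0 < e / 2 by lra.
have [z [z0 z1 z2]] := min_pos e2 (divr_gt0 ha K'0).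
have nz : `|z| = z by rewrite ger0_norm // ltW.
have ze : z < e by lra.
have := H z; rewrite nz => /(_ z0 ze) hz.
move: z2; rewrite ler_pdivlMr // => hz2.
have : K * z <= `|K| * z by apply: ler_wpM2r; [exact: ltW | exact: ler_norm].
nra.
Qed.

Lemma coef0_zero N (d : {poly R}) (C e : R) : 0 < e ->
  (forall z : R, 0 < `|z| -> `|z| < e -> `|d.[z]| <= C * `|z| ^+ N.+1) -> d`_0 = 0.
Proof.
move=> e0 H.
set r := \poly_(i < size d) d`_(i.+1).
have Ed := polyX_decomp d; rewrite -/r in Ed.
have [M [M0 HM]] := polyX_bound r 1.
have [e' [e'0 he1 he2]] := min_pos e0 ltr01.
pose K := `|C| + M.
apply: (@small_zero _ K e' e'0) => z z0 zd; rewrite /K.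
have hz1 : `|z| <= 1 by lra.
have e1 := H z z0 (lt_le_trans zd he1).
have e2 := HM z hz1; rewrite expr1 in e2.
have hw : `|z| ^+ N.+1 <= `|z|.
  by rewrite -{2}(expr1 `|z|); apply: ler_wiXn2l; rewrite ?normr_ge0.
have hw0 := exprn_ge0 N.+1 (normr_ge0 z).
have e3 : C * `|z| ^+ N.+1 <= `|C| * `|z|.
  apply: le_trans (_ : `|C| * `|z| ^+ N.+1 <= _).
    by apply: ler_wpM2r => //; exact: ler_norm.
  by apply: ler_wpM2l => //; exact: normr_ge0.
have : d`_0 = d.[z] - ('X^1 * r).[z].
  by rewrite {2}Ed hornerD hornerC expr1; ring.
move=> ->.
apply: le_trans (ler_normD _ _) _; rewrite normrN mulrDl; lra.
Qed.

Lemma coef_zero N (d : {poly R}) (C e : R) : 0 < e ->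
  (forall z : R, 0 < `|z| -> `|z| < e -> `|d.[z]| <= C * `|z| ^+ N.+1) ->
  forall i, (i <= N)%N -> d`_i = 0.
Proof.
elim: N d C => [|N IH] d C e0 H i hi.
  by rewrite leqn0 in hi; move/eqP: hi => ->; exact: coef0_zero e0 H.
case: i hi => [|i] hi; first exact: coef0_zero e0 H.
set r := \poly_(i < size d) d`_(i.+1).
have Ed := polyX_decomp d; rewrite -/r (coef0_zero e0 H) addr0 in Ed.
have -> : d`_i.+1 = r`_i by rewrite {1}Ed coefXM.
apply: (IH r C e0) => // z z0 zd.
have := H z z0 zd; rewrite {1}Ed hornerM hornerX normrM exprS.
by rewrite mulrCA ler_pM2l.
Qed.

Lemma approx_unique F (p q : {poly R}) N : approx F p N -> approx F q N ->
  forall i, (i <= N)%N -> p`_i = q`_i.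
Proof.
move=> [C1 [d1 [C10 d10 d11 H1]]] [C2 [d2 [C20 d20 d21 H2]]] i hi.
have [d [d0 hd1 hd2]] := @min_pos d1 d2 d10 d20.
apply/eqP; rewrite -subr_eq0 -coefB; apply/eqP.
apply: (@coef_zero N (p - q) (C1 + C2) d d0) => // z z0 zd.
have e1 := H1 z z0 (lt_le_trans zd hd1).
have e2 := H2 z z0 (lt_le_trans zd hd2).
rewrite hornerD hornerN.
have -> : p.[z] - q.[z] = (F z - q.[z]) - (F z - p.[z]) by ring.
apply: le_trans (ler_normD _ _) _; rewrite normrN mulrDl; lra.
Qed.


Lemma dpl_ext (f g : R -> R) x l : (forall y, f y = g y) ->
  derivable_pt_lim f x l -> derivable_pt_lim g x l.
Proof.
move=> E H eps he; have [d Hd] := H eps he; exists d => h h0 hd.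
by rewrite -!E; exact: Hd.
Qed.

Lemma dpl_eq (f : R -> R) x l l' : derivable_pt_lim f x l -> l = l' ->
  derivable_pt_lim f x l'.
Proof. by move=> H <-. Qed.

Lemma horner_dpl (p : {poly R}) x : derivable_pt_lim (fun y => p.[y]) x (p^`()).[x].
Proof.
elim/poly_ind: p => [|p c IH].
  apply: dpl_ext (fun y => esym (horner0 y)) _; rewrite deriv0 horner0.
  exact: derivable_pt_lim_const.
apply: dpl_ext (fun y => esym (hornerMXaddC p c y)) _.
have H1 := derivable_pt_lim_plus _ _ x _ _
  (derivable_pt_lim_mult _ _ x _ _ IH (derivable_pt_lim_id x))
  (derivable_pt_lim_const c x).
apply: dpl_eq H1 _.
rewrite derivMXaddC hornerD hornerM hornerX /id /fct_cte /=.
rewrite /Ranalysis1.id ?RplusE ?RmultE R1E R0E; ring.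
Qed.

Lemma taylor_step (f f' : R -> R) (p : {poly R}) (r C : R) N :
  0 < r -> 0 <= C -> (forall s, `|s| < r -> derivable_pt_lim f s (f' s)) ->
  f 0 = p.[0] ->
  (forall s, `|s| < r -> `|f' s - (p^`()).[s]| <= C * `|s| ^+ N) ->
  forall u, `|u| < r -> `|f u - p.[u]| <= C * `|u| ^+ N.+1.
Proof.
move=> r0 C0 Hd H0 Hb u ur.
pose g := fun y => f y - p.[y].
pose g' := fun y => f' y - (p^`()).[y].
have gd : forall s, `|s| < r -> derivable_pt_lim g s (g' s).
  move=> s sr; apply: dpl_ext (derivable_pt_lim_minus _ _ _ _ _ (Hd s sr) (horner_dpl p s)).
  by move=> y; rewrite /g /minus_fct.
have g0 : g 0 = 0 by rewrite /g H0 subrr.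
have key : forall a b, a < b -> `|a| < r -> `|b| < r ->
    exists c, g b - g a = g' c * (b - a) /\ a < c < b.
  move=> a b ab ar br.
  have hc : forall c, Rle a c /\ Rle c b -> derivable_pt_lim g c (g' c).
    move=> c [/RleP ac /RleP cb]; apply: gd.
    case: (lerP 0 c) => c0.
      by rewrite ger0_norm //; apply: le_lt_trans cb (le_lt_trans (ler_norm b) br).
    rewrite ltr0_norm //; apply: le_lt_trans _ ar.
    by rewrite -normrN; apply: le_trans (ler_norm _); rewrite lerN2.
  have [c [Hc [/RltP ac /RltP cb]]] := MVT_cor2 g g' a b (elimT RltP ab) hc.
  by exists c; rewrite ac cb.
have gb : forall c, `|c| <= `|u| -> `|g' c| <= C * `|u| ^+ N.
  move=> c cu; apply: le_trans (Hb c (le_lt_trans cu ur)) _.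
  apply: ler_wpM2l => //; apply: lerXn2r => //; rewrite nnegrE normr_ge0 //.
rewrite -/(g u) exprSr mulrA.
case: (ltgtP 0 u) => [up|un|u0].
- have [c [Hc /andP[c0 cu]]] := key 0 u up ltac:(by rewrite normr0) ur.
  move: Hc; rewrite g0 !subr0 => ->.
  rewrite normrM (ger0_norm (ltW up)); apply: ler_wpM2r; first exact: ltW.
  by have := gb c; rewrite (ger0_norm (ltW up)) (ger0_norm (ltW c0)); apply; exact: ltW.
- have [c [Hc /andP[uc c0]]] := key u 0 un ur ltac:(by rewrite normr0).
  move: Hc; rewrite g0 sub0r => /eqP; rewrite eqr_oppLR => /eqP ->.
  rewrite normrN normrM sub0r normrN; apply: ler_wpM2r; first exact: normr_ge0.
  by apply: gb; rewrite (ltr0_norm un) (ltr0_norm c0) lerN2; exact: ltW.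
- by rewrite -u0 g0 !normr0 mulr0.
Qed.


Lemma exp_mono (x y : R) : x <= y -> exp x <= exp y.
Proof.
rewrite le_eqVlt => /orP[/eqP -> //| /RltP h].
by apply/RleP; apply: Rlt_le; apply: exp_increasing.
Qed.

Lemma exp_gt0 (x : R) : 0 < exp x.
Proof. by apply/RltP; apply: exp_pos. Qed.

Lemma fact_neq0 (n : nat) : (n`!%:R : R) != 0.
Proof. by rewrite pnatr_eq0 -lt0n fact_gt0. Qed.

Definition Gp (M : nat) : {poly R} := \poly_(j < M.+1) (j`!%:R)^-1.

Lemma Gp_deriv M : (Gp M.+1)^`() = Gp M.
Proof.
apply/polyP => i; rewrite coef_deriv !coef_poly ltnS.
case: ltnP => _; last by rewrite mul0rn.
rewrite factS natrM invfM -[_ *+ _]mulr_natr mulrAC mulVf ?mul1r //.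
by rewrite pnatr_eq0.
Qed.

Lemma Gp0_deriv : (Gp 0)^`() = 0.
Proof. by apply/polyP => i; rewrite coef_deriv coef_poly coef0 mul0rn. Qed.

Lemma Gp_at0 M : (Gp M).[0] = 1.
Proof. by rewrite horner_coef0 coef_poly /= invr1. Qed.

Lemma exp_taylor M (u : R) : `|u| < 1 -> `|exp u - (Gp M).[u]| <= 3 * `|u| ^+ M.+1.
Proof.
have hd : forall s : R, `|s| < 1 -> derivable_pt_lim exp s (exp s).
  by move=> s _; apply: derivable_pt_lim_exp.
have h0 : exp 0 = (Gp _).[0] by move=> K; rewrite Gp_at0 expR0.
elim: M u => [|M IH] u hu.
  apply: (taylor_step ltr01 _ hd (h0 0%N)) => //.
  move=> s hs; rewrite Gp0_deriv horner0 subr0 expr0 mulr1.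
  rewrite ger0_norm; last exact: ltW (exp_gt0 s).
  apply: le_trans (exp_mono (_ : s <= 1)) _.
    by apply: le_trans (ler_norm s) (ltW hs).
  by apply/RleP; exact: exp_le_3.
apply: (taylor_step ltr01 _ hd (h0 M.+1)) => //.
by move=> s hs; rewrite Gp_deriv; apply: IH.
Qed.


Lemma falling_S (a : R) m : falling a m.+1 = a * falling (a - 1) m.
Proof.
elim: m a => [|m IH] a.
  by rewrite /= ?RmultE ?RminusE ?INRE ?R1E ?R0E; ring.
change (falling a m.+1 * (a - INR m.+1) = a * (falling (a - 1) m * ((a - 1) - INR m))).
rewrite IH ?INRE.
rewrite -addn1 natrD; ring.
Qed.

Definition Tp (a : R) (N : nat) : {poly R} := \poly_(m < N.+1) (falling a m / (m`!)%:R).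

Lemma Tp_deriv a N : (Tp a N.+1)^`() = a *: Tp (a - 1) N.
Proof.
apply/polyP => i; rewrite coef_deriv coefZ !coef_poly ltnS.
case: ltnP => _; last by rewrite mul0rn mulr0.
rewrite falling_S factS natrM -mulr_natr.
field; by rewrite fact_neq0 addrC natr1 pnatr_eq0.
Qed.

Lemma Tp0_deriv a : (Tp a 0)^`() = 0.
Proof. by apply/polyP => i; rewrite coef_deriv coef_poly coef0 mul0rn. Qed.

Lemma Tp_at0 a N : (Tp a N).[0] = 1.
Proof. by rewrite horner_coef0 coef_poly /= R1E divr1. Qed.

Lemma half_pos (s : R) : `|s| < 1/2 -> 0 < 1 + s.
Proof. move=> h; have := ler_norm (- s); rewrite normrN; lra. Qed.

Lemma H_deriv (a s : R) : `|s| < 1/2 ->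
  derivable_pt_lim (fun u => Rpower (1 + u) a) s (a * Rpower (1 + s) (a - 1)).
Proof.
move=> hs; have pos := half_pos hs.
have d1 : derivable_pt_lim (fun u => 1 + u) s 1.
  apply: dpl_eq (derivable_pt_lim_plus _ _ s _ _ (derivable_pt_lim_const 1 s) (derivable_pt_lim_id s)) _.
  by rewrite RplusE R0E add0r.
have := derivable_pt_lim_comp _ _ s _ _ d1 (derivable_pt_lim_power (1 + s) a (elimT RltP pos)).
move=> H; apply: dpl_ext (dpl_eq H _) => //.
by rewrite R1E RmultE mulr1.
Qed.

Lemma Rpower_1base (a : R) : Rpower 1 a = 1.
Proof. by rewrite /Rpower ln_1 RmultE R0E mulr0 expR0. Qed.

Lemma Rpower_gt0 (x a : R) : 0 < Rpower x a.
Proof. exact: exp_gt0. Qed.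

Lemma ln_bound (s : R) : `|s| < 1/2 -> `|ln (1 + s)| <= 1.
Proof.
move=> hs; have pos := half_pos hs.
have e2 : 1 + 1 < exp 1.
  have := exp_ineq1 1 R1_neq_R0; rewrite R1E => /RltP; by rewrite RplusE.
have two0 : 0 < 1 + 1 :> R by rewrite addr_gt0 ?ltr01.
have l2 : ln (1 + 1) < 1.
  have /RltP := ln_increasing _ _ (elimT RltP two0) (elimT RltP e2).
  by rewrite ln_exp.
have hn := ler_norm s; have hn' := ler_norm (- s); rewrite normrN in hn'.
have up : ln (1 + s) < ln (1 + 1).
  apply/RltP; apply: ln_increasing; apply/RltP; rewrite ?RplusE ?R1E; rewrite ?RplusE ?R1E ?R0E; lra.
have inv0 : 0 < (1 + 1)^-1 :> R by rewrite invr_gt0.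
have lo : ln ((1 + 1)^-1) < ln (1 + s).
  apply/RltP; apply: ln_increasing; apply/RltP; rewrite ?RplusE ?R1E ?RinvE //.
  have -> : (1 + 1)^-1 = 1/2 :> R by rewrite div1r.
  lra.
have : ln ((1 + 1)^-1) = - ln (1 + 1).
  by rewrite -RinvE ln_Rinv //; apply/RltP.
move=> E; rewrite E in lo.
rewrite ler_norml; apply/andP; split; lra.
Qed.

Lemma Rpower_bound (s b : R) : `|s| < 1/2 -> Rpower (1 + s) b <= exp `|b|.
Proof.
move=> hs; rewrite /Rpower; apply: exp_mono.
have := ln_bound hs; rewrite RmultE => h.
apply: le_trans (ler_norm _) _; rewrite normrM.
have := normr_ge0 b; have := normr_ge0 (ln (1 + s)); nra.
Qed.

Lemma rpower_taylor N (a : R) : exists K : R, 0 <= K /\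
  forall u : R, `|u| < 1/2 -> `|Rpower (1 + u) a - (Tp a N).[u]| <= K * `|u| ^+ N.+1.
Proof.
have r0 : 0 < 1/2 :> R by lra.
have h0 : forall a N, Rpower (1 + 0) a = (Tp a N).[0].
  by move=> b M; rewrite Tp_at0 RplusE R0E addr0 Rpower_1base.
elim: N a => [|N IH] a.
  exists (`|a| * exp `|a - 1|); split.
    by apply: mulr_ge0; [exact: normr_ge0 | exact: ltW (exp_gt0 _)].
  apply: (taylor_step r0 _ (fun s hs => H_deriv a hs) (h0 a 0%N)).
    by apply: mulr_ge0; [exact: normr_ge0 | exact: ltW (exp_gt0 _)].
  move=> s hs; rewrite Tp0_deriv horner0 subr0 expr0 mulr1 normrM.
  apply: ler_wpM2l; first exact: normr_ge0.
  rewrite ger0_norm; last exact: ltW (Rpower_gt0 _ _).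
  exact: Rpower_bound.
have [K [K0 HK]] := IH (a - 1).
exists (`|a| * K); split; first by apply: mulr_ge0 => //; exact: normr_ge0.
apply: (taylor_step r0 _ (fun s hs => H_deriv a hs) (h0 a N.+1)).
  by apply: mulr_ge0 => //; exact: normr_ge0.
move=> s hs; rewrite Tp_deriv hornerZ -mulrBr normrM -mulrA.
by apply: ler_wpM2l; [exact: normr_ge0 | exact: HK].
Qed.


Definition cvR (T : nat -> R) (l : R) := forall eps : R, 0 < eps ->
  exists N, forall n, (N <= n)%N -> `|T n - l| < eps.

Lemma isum_cv (s : nat -> R) l : infinite_sum s l ->
  cvR (fun n => \sum_(k < n.+1) s k) l.
Proof.
move=> H eps /RltP he; have [N HN] := H eps he; exists N => n hn.
have := HN n (elimT ssrnat.leP hn); rewrite RdistE sum_f_R0E big_mkord => /RltP //.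
Qed.

Lemma lim_le (T : nat -> R) l c B N : cvR T l ->
  (forall n, (N <= n)%N -> `|T n - c| <= B) -> `|l - c| <= B.
Proof.
move=> H HB; case: (lerP `|l - c| B) => // hlt.
have e0 : 0 < `|l - c| - B by lra.
have [N1 HN1] := H _ e0.
have h1 := HN1 (maxn N N1) (leq_maxr _ _).
have h2 := HB (maxn N N1) (leq_maxl _ _).
have := ler_normD (l - T (maxn N N1)) (T (maxn N N1) - c).
rewrite distrC in h1.
have -> : l - T (maxn N N1) + (T (maxn N N1) - c) = l - c by ring.
lra.
Qed.

Lemma bounded_terms (s : nat -> R) l : infinite_sum s l ->
  exists M : R, 0 <= M /\ forall k, `|s k| <= M.
Proof.
move=> /isum_cv H.
have [N0 HN] := H 1 ltr01.
exists (2 + \sum_(j < N0.+1) `|s j|); split.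
  have : 0 <= \sum_(j < N0.+1) `|s j| by apply: sumr_ge0 => j _; exact: normr_ge0.
  lra.
move=> k; case: (ltnP k N0.+1) => hk.
  have : `|s k| <= \sum_(j < N0.+1) `|s j|.
    rewrite (bigD1 (Ordinal hk)) //= -[X in X <= _]addr0 lerD2l.
    by apply: sumr_ge0 => j _; exact: normr_ge0.
  lra.
case: k hk => [//|k] hk.
have h1 := HN k.+1 (ltnW hk).
have h2 := HN k hk.
have : s k.+1 = (\sum_(j < k.+2) s j - l) - (\sum_(j < k.+1) s j - l).
  by rewrite big_ord_recr /=; ring.
move=> ->.
have := ler_normD (\sum_(j < k.+2) s j - l) (- (\sum_(j < k.+1) s j - l)).
rewrite normrN.
have : 0 <= \sum_(j < N0.+1) `|s j| by apply: sumr_ge0 => j _; exact: normr_ge0.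
lra.
Qed.

Lemma series_approx (a : nat -> R) (F : R -> R) (e : R) N : 0 < e ->
  (forall z, 0 < `|z| -> `|z| < e -> infinite_sum (fun k => a k * z ^+ k) (F z)) ->
  approx F (\poly_(k < N.+1) a k) N.
Proof.
move=> e0 H.
have [z0 [z00 z0e]] : exists z0 : R, 0 < z0 /\ z0 < e by exists (e / 2); split; lra.
have nz0 : `|z0| = z0 by rewrite ger0_norm // ltW.
have [M [M0 HM]] := bounded_terms (H z0 ltac:(by rewrite nz0) ltac:(rewrite nz0; lra)).
pose d := z0 / 2.
have d0 : 0 < d by rewrite /d; lra.
pose C := 2 * M / z0 ^+ N.+1.
apply: (@approx_intro _ _ _ C d d0) => z zp zd; rewrite /d in zd; rewrite /C.
pose rho := `|z| / z0.
have rho0 : 0 <= rho by apply: divr_ge0; [exact: normr_ge0 | exact: ltW].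
have rho1 : 2 * rho <= 1.
  rewrite /rho mulrA ler_pdivrMr // mul1r; lra.
have tb : forall k, `|a k * z ^+ k| <= M * rho ^+ k.
  move=> k; have := HM k.
  have -> : a k * z ^+ k = (a k * z0 ^+ k) * (z / z0) ^+ k.
    have nz : z0 ^+ k != 0 by rewrite expf_neq0 // gt_eqF.
    by rewrite exprMn exprVn [z ^+ k * _]mulrC mulrA -(mulrA (a k)) mulfV ?mulr1.
  move=> hk; rewrite normrM normrX normf_div nz0 -/rho.
  by apply: ler_wpM2r => //; exact: exprn_ge0.
pose S n := \sum_(k < n.+1) a k * z ^+ k.
have step : forall j, `|S (N + j)%N - S N| <= 2 * M * rho ^+ N.+1 - 2 * M * rho ^+ (N + j).+1.
  elim=> [|j IH]; first by rewrite addn0 subrr normr0; lra.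
  have -> : S (N + j.+1)%N - S N = (S (N + j)%N - S N) + a (N + j).+1 * z ^+ (N + j).+1.
    by rewrite /S addnS big_ord_recr /=; ring.
  have hb := tb (N + j).+1.
  have w0 := exprn_ge0 (N + j).+1 rho0.
  rewrite addnS (exprS rho (N + j).+1).
  apply: le_trans (ler_normD _ _) _.
  have : M * rho ^+ (N + j).+1 * (2 * rho) <= M * rho ^+ (N + j).+1 * 1.
    by apply: ler_wpM2l => //; exact: mulr_ge0.
  lra.
have zde : `|z| < e by lra.
have H1 : `|F z - S N| <= 2 * M * rho ^+ N.+1.
  apply: (@lim_le _ _ (S N) _ N (isum_cv (H z zp zde))) => n hn.
  have := step (n - N)%N; rewrite subnKC // => h.
  apply: le_trans h _.
  have := mulr_ge0 M0 (exprn_ge0 n.+1 rho0); lra.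
rewrite horner_poly -/(S N); apply: le_trans H1 _.
have -> : rho ^+ N.+1 = `|z| ^+ N.+1 / z0 ^+ N.+1 by rewrite /rho exprMn exprVn.
by rewrite mulrA mulrAC.
Qed.


Lemma stirling2_SS j k : stirling2 j.+1 k.+1 = (k.+1 * stirling2 j k.+1 + stirling2 j k)%N.
Proof. by []. Qed.

Lemma stir_coef M j k : (j <= M.+1)%N ->
  ((Gp M.+1 - 1) ^+ k)`_j = k`!%:R * (stirling2 j k)%:R / j`!%:R.
Proof.
set D := Gp M.+1 - 1.
have D0 : D`_0 = 0 by rewrite /D coefB coef1 coef_poly /= invr1 subrr.
have rec : forall j k, (j <= M)%N ->
    (D ^+ k.+1)`_j.+1 *+ j.+1 = ((D ^+ k.+1)`_j + (D ^+ k)`_j) *+ k.+1.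
  move=> i l hi.
  rewrite -coef_deriv deriv_exp /= coefMn; congr (_ *+ _).
  have -> : D^`() = Gp M by rewrite /D derivB Gp_deriv derivC subr0.
  have -> : (D ^+ l.+1)`_i + (D ^+ l)`_i = ((D + 1) * D ^+ l)`_i.
    by rewrite mulrDl mul1r -exprS coefD.
  rewrite !coefM; apply: eq_bigr => [[u hu]] _ /=.
  congr (_ * _); rewrite /D coefD coefB !coef_poly.
  have -> : (u < M.+1)%N by apply: leq_trans hu _; rewrite ltnS.
  have -> : (u < M.+2)%N by apply: leq_trans hu _; rewrite ltnS ltnW.
  by rewrite subrK.
elim: j k => [|j IH] k hj.
  case: k => [|k]; first by rewrite expr0 coef1 /= mulr1 divr1.
  by rewrite exprS coef0M D0 mul0r /= mulr0 mul0r.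
case: k => [|k]; first by rewrite expr0 coef1 /= mulr0 mul0r.
have hjM : (j <= M)%N by rewrite -ltnS.
have := rec j k hjM.
rewrite !IH ?(leq_trans (leqnSn _) hj) // => E.
have jn0 : j.+1%:R != 0 :> R by rewrite pnatr_eq0.
apply: (mulIf jn0); rewrite [LHS]mulr_natr E.
have -> : stirling2 j.+1 k.+1 = (k.+1 * stirling2 j k.+1 + stirling2 j k)%N by [].
rewrite -[LHS]mulr_natr natrD natrM !factS !natrM.
field; by rewrite fact_neq0 addrC natr1 pnatr_eq0.
Qed.

Definition Ep (L : nat) : {poly R} := \poly_(j < L.+1) ((j.+1)`!%:R)^-1.

Lemma XEp L : 'X * Ep L = Gp L.+1 - 1.
Proof.
apply/polyP => i; rewrite coefXM coefB coef1 !coef_poly.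
case: i => [|i] /=; first by rewrite invr1 subrr.
by rewrite subr0 ltnS.
Qed.

Lemma Ep_coef L n i : (n + i <= L.+1)%N ->
  (Ep L ^+ i)`_n = i`!%:R * (stirling2 (n + i) i)%:R / (n + i)`!%:R.
Proof.
move=> h; rewrite -(@stir_coef L) //.
by rewrite -XEp exprMn_comm ?coefXnM ?ltnNge ?leq_addl //= ?addnK //; exact: mulrC.
Qed.

Lemma signpoly k : (-1 : {poly R}) ^+ k = ((-1) ^+ k)%:P.
Proof. by rewrite -polyC1 -polyCN -rmorphXn. Qed.

Lemma comp_coef (a beta : R) (n L : nat) : (n + n <= L.+1)%N ->
  (Tp a n \Po (beta *: (Ep L - 1)))`_n =
  \sum_(m < n.+1) (falling a m / m`!%:R) * (beta ^+ m *
     \sum_(i < m.+1) ((-1) ^+ (m - i) * (i`!%:R * (stirling2 (n + i) i)%:R / (n + i)`!%:R)) *+ 'C(m, i)).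
Proof.
move=> hL; rewrite /Tp poly_def raddf_sum coef_sum; apply: eq_bigr => [[m hm]] _ /=.
rewrite comp_polyZ comp_Xn_poly coefZ exprZn coefZ addrC exprDn coef_sum.
congr (_ * (_ * _)); apply: eq_bigr => [[i hi]] _ /=.
rewrite coefMn signpoly coefCM Ep_coef //.
apply: leq_trans hL; rewrite leq_add2l; apply: leq_trans (_ : m <= n)%N.
  by rewrite -ltnS.
by rewrite -ltnS.
Qed.


Lemma C_binE m i : (i <= m)%N -> Binomial.C m i = 'C(m, i)%:R.
Proof.
move=> h; rewrite /Binomial.C !INRE !factE -(bin_fact h) !natrM RdivE RmultE.
by field; rewrite !fact_neq0.
Qed.

Lemma final_eq (t beta : R) n (bn : R) :
  bn / n`!%:R = \sum_(m < n.+1) (falling (- t) m / m`!%:R) * (beta ^+ m *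
     \sum_(i < m.+1) ((-1) ^+ (m - i) * (i`!%:R * (stirling2 (n + i) i)%:R / (n + i)`!%:R)) *+ 'C(m, i)) ->
  bn = Bstar0_formula t beta n.
Proof.
move=> H; have -> : bn = n`!%:R * (bn / n`!%:R) by field; rewrite fact_neq0.
rewrite H /Bstar0_formula sum_f_R0E big_mkord mulr_sumr; apply: eq_bigr => [[m hm]] _ /=.
rewrite sum_f_R0E big_mkord /gbinom RpowE INRE factE RmultE RmultE RdivE RoppE.
rewrite !mulr_sumr; apply: eq_bigr => [[i hi]] _ /=.
have him : (i <= m)%N by rewrite -ltnS.
rewrite RdivE !RmultE RpowE INRE C_binE // C_binE ?leq_addr //.
have hb := bin_fact (leq_addr i n); rewrite addKn in hb.
have hb' : 'C(n + i, n)%:R * (n`!%:R * i`!%:R) = (n + i)`!%:R :> R.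
  by rewrite -!natrM hb.
rewrite -hb' -mulr_natr.
have cn0 : 'C(n + i, n)%:R != 0 :> R.
  by rewrite pnatr_eq0 -lt0n bin_gt0 leq_addr.
field; by rewrite !fact_neq0 cn0.
Qed.

Lemma isum_ext (f g : nat -> R) l : (forall k, f k = g k) -> infinite_sum f l -> infinite_sum g l.
Proof.
move=> E; have -> : g = f by apply: functional_extensionality => k; rewrite E.
done.
Qed.

Lemma main_coef (t beta : R) (b : nat -> R -> R) (hb : is_Bstar t beta b) n :
  b n 0 / n`!%:R = (Tp (- t) n \Po (beta *: (Ep (n + n) - 1)))`_n.
Proof.
set L := (n + n)%N.
have [e [/RltP e0 He]] := hb 0.
rewrite R0E in e0.
pose F := fun z => Bstar_gf t beta 0 z.
have A1 : approx F (\poly_(k < n.+1) (b k 0 / k`!%:R)) n.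
  apply: (@series_approx _ _ e) => // z z0 ze.
  have hz : Rlt 0 (Rabs z) /\ Rlt (Rabs z) e by rewrite RabsE; split; apply/RltP.
  apply: isum_ext (He z hz) => k.
  by rewrite RdivE RmultE RpowE INRE factE mulrAC.
have A2 : approx (fun z => (exp z - 1) / z) (Ep L) L.
  apply: (@approx_intro _ _ _ (GRing.natmul (GRing.one R) 3) 1 ltr01) => z z0 z1.
  have := exp_taylor L.+1 z1.
  have Gz : (Gp L.+1).[z] = z * (Ep L).[z] + 1.
    by rewrite -(subrK 1 (Gp L.+1)) -XEp hornerD hornerM hornerX hornerC.
  rewrite Gz => h.
  have zn0 : z != 0 by rewrite -normr_gt0.
  have -> : (exp z - 1) / z - (Ep L).[z] = (exp z - (z * (Ep L).[z] + 1)) / z.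
    by field.
  rewrite normf_div ler_pdivrMr //.
  have -> : 3 * `|z| ^+ L.+1 * `|z| = 3 * `|z| ^+ L.+2 by rewrite [in RHS]exprSr mulrA.
  exact: h.
have A3 : approx (fun z => beta * ((exp z - 1) / z - 1)) (beta *: (Ep L - 1)) L.
  have := approx_mul (approx_const L beta) (approx_add A2 (approx_const L (-1))).
  rewrite mul_polyC polyCN polyC1 => H.
  by apply: approx_feq H _ => z.
have A4 := approx_weaken (leq_addr n n) A3.
have q0 : (beta *: (Ep L - 1))`_0 = 0.
  by rewrite coefZ coefB coef1 coef_poly /= invr1 subrr mulr0.
have [K [K0 HK]] := rpower_taylor n (- t).
have r0 : 0 < 1/2 :> R by lra.
have A5 := approx_taylor r0 K0 HK A4 q0.
have [L' [rho [L'0 rho0 HL]]] := approx_small A4 q0.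
have r1 : 0 < (2 * (L' + 1))^-1 by rewrite invr_gt0; lra.
have [e' [e'0 he1 he2]] := min_pos rho0 r1.
have A6 : approx F (Tp (- t) n \Po (beta *: (Ep L - 1))) n.
  apply: (approx_ext e'0 A5) => z z0 ze.
  set U := beta * ((exp z - 1) / z - 1).
  have hU : `|U| <= L' * `|z| by apply: HL => //; exact: lt_le_trans ze he1.
  have zsmall : `|z| * (2 * (L' + 1)) < 1.
    have h2 : 0 < 2 * (L' + 1) by lra.
    by rewrite -ltr_pdivlMr // div1r; exact: lt_le_trans ze he2.
  have U2 : `|U| < 1/2 by nra.
  have Upos : 0 < 1 + U by have := ler_norm (- U); rewrite normrN; lra.
  have zn0 : z != 0 by rewrite -normr_gt0.
  rewrite /F /Bstar_gf ?RmultE ?RplusE ?RminusE ?RdivE ?R1E ?R0E mul0r expR0 mulr1.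
  have den : beta * (exp z - 1) + (1 - beta) * z = z * (1 + U).
    by rewrite /U; field.
  rewrite den.
  have -> : z / (z * (1 + U)) = (1 + U)^-1 by field; rewrite gt_eqF.
  rewrite /Rpower -RinvE ln_Rinv; last exact/RltP.
  by rewrite !RmultE RoppE mulrN mulNr.
have := approx_unique A1 A6 (leqnn n).
by rewrite coef_poly ltnSn.
Qed.

Theorem corollary4p4' (t beta : R) (b : nat -> R -> R) (hb : is_Bstar t beta b) :
  forall n : nat, b n 0 = Bstar0_formula t beta n.
Proof.
move=> n; apply: final_eq; rewrite -(@comp_coef _ _ _ (n + n)) ?leqnSn //; exact: main_coef.
Qed.


Close Scope ring_scope.
Unset Implicit Arguments.
Open Scope R_scope.

Theorem corollary4p4 (t beta : R) (hb0 : 0 <= beta) (hb1 : beta <= 1)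
  (b : nat -> R -> R) (hb : is_Bstar t beta b) :
  forall n : nat, b n 0 = Bstar0_formula t beta n.
Proof.
  intro n; exact (corollary4p4' hb n).
Qed.
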